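(* Let $f$ be the map from countable graphs to structures in the class $\mathfrak C$ described in the context. For all countable graphs $\mathcal G,\mathcal H$: $\mathcal G$ embeds into $\mathcal H$ if and only if $f(\mathcal G)$ is elementarily embeddable into $f(\mathcal H)$.
   Context: Let $\mathcal S=(2^\omega,(F_\nu)_{\nu\in 2^{<\omega}},(R_\nu)_{\nu\in2^{<\omega}})$ where $F_\nu(\sigma)(x)=\sigma(x)+\nu(x)\bmod 2$ (with $\nu(x)=0$ for $x\ge|\nu|$) and $R_\nu(\sigma)$ holds iff $\nu\preceq\sigma$ ($\nu$ is an initial segment of $\sigma$). Let $\hat{\mathcal S}_0$, $\hat{\mathcal S}_1$ be the substructures of $\mathcal S$ generated by the constant sequence $\bar 0$, resp. $\bar 1$. Let $\mathcal S_0,\mathcal S_1$ be the relational versions of $\hat{\mathcal S}_0,\hat{\mathcal S}_1$, obtained by replacing each $F_\nu$ by its graph $graph_{F_\nu}$ (a binary relation), copied onto universe $\omega$. The class $\mathfrak C$ consists of structures with universe $\omega$ in the language with a unary relation $W$, binary relations $R_\nu$ and $graph_{F_\nu}$ ($\nu\in2^{<\omega}$), a binary relation $N$ and a ternary relation $O$. Fix a partition of $\omega$ into infinite coinfinite sets $(A_i)_{i\in\omega}$, write $A_0=\{a_0,a_1,\dots\}$, and let $\langle\cdot,\cdot\rangle$ be a pairing function. Given a graph $\mathcal G$ on $\omega$ with edge relation $E$, $f(\mathcal G)$ is defined by: $W(a_i)$ for all $a_i\in A_0$; for all $m,n$, the relations $R_\nu$, $graph_{F_\nu}$ restricted to $A_{\langle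 m,n\rangle+1}$ form a copy of $\mathcal S_0$ if $mEn$ and a copy of $\mathcal S_1$ if not $mEn$; $O(a_m,a_n,j)$ for all $j\in A_{\langle m,n\rangle+1}$; and for every $i$, $N(a_i,x)$ holds exactly for $x\in\bigcup_{j}A_{\langle i,j\rangle+1}$. No other instances of relations hold. An embedding of graphs is an injective map preserving edges and non-edges. *)

(* Defs.v *)
From mathcomp Require Import all_boot.
Set Implicit Arguments. Unset Strict Implicit. Unset Printing Implicit Defensive.

Definition cantor := nat -> bool.

(* nu in 2^{<omega} is a finite binary string [seq bool];
   nu(x) = 0 (false) for x >= |nu|. *)
Definition F (nu : seq bool) (s : cantor) : cantor :=
  fun x => addb (s x) (nth false nu x).

Definition prefix (nu : seq bool) (s : cantor) : Prop :=
  forall i, i < size nu -> nth false nu i = s i.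

Inductive generated (s0 : cantor) : cantor -> Prop :=
| gen_base : forall t, t =1 s0 -> generated s0 t
| gen_step : forall nu t t', generated s0 t -> t' =1 F nu t -> generated s0 t'.

Definition zero_seq : cantor := fun _ => false.
Definition one_seq : cantor := fun _ => true.

Inductive sym : Type :=
| sW
| sR (nu : seq bool)
| sGF (nu : seq bool)
| sN
| sO.

Definition structure := sym -> seq nat -> Prop.

Inductive formula : Type :=
| fRel (s : sym) (vs : seq nat)
| fEq (i j : nat)
| fNeg (phi : formula)
| fAnd (phi psi : formula)
| fEx (i : nat) (phi : formula).

Definition update (a : nat -> nat) (i x : nat) : nat -> nat :=
  fun j => if j == i then x else a j.

Fixpoint sat (M : structure) (a : nat -> nat) (phi : formula) : Prop :=
  match phi with
  | fRel s vs => M s (map a vs)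
  | fEq i j => a i = a j
  | fNeg phi => ~ sat M a phi
  | fAnd phi psi => sat M a phi /\ sat M a psi
  | fEx i phi => exists x, sat M (update a i x) phi
  end.

Definition elementary_embedding (M N : structure) (h : nat -> nat) : Prop :=
  forall (phi : formula) (a : nat -> nat), sat M a phi <-> sat N (h \o a) phi.

Definition elem_embeddable (M N : structure) : Prop :=
  exists h, elementary_embedding M N h.

Definition is_graph (E : nat -> nat -> Prop) : Prop :=
  (forall m n, E m n -> E n m) /\ (forall m, ~ E m m).

Definition graph_embeds (E E' : nat -> nat -> Prop) : Prop :=
  exists g : nat -> nat,
    (forall m n, g m = g n -> m = n) /\ (forall m n, E m n <-> E' (g m) (g n)).

Definition is_partition (A : nat -> nat -> Prop) : Prop :=
  (forall x, exists i, A i x) /\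
  (forall i j x, A i x -> A j x -> i = j) /\
  (forall i n, exists x, n <= x /\ A i x) /\
  (forall i n, exists x, n <= x /\ ~ A i x).

Definition enumerates (a : nat -> nat) (B : nat -> Prop) : Prop :=
  (forall i, B (a i)) /\ (forall i j, a i = a j -> i = j) /\
  (forall x, B x -> exists i, a i = x).

Definition pairing (p : nat -> nat -> nat) : Prop :=
  (forall m n m' n', p m n = p m' n' -> m = m' /\ n = n') /\
  (forall k, exists m n, p m n = k).

(* The relations R_nu, graph_{F_nu} of M restricted to the set B form a copy
   of the relational version of the substructure of S generated by s0. *)
Definition is_copy (B : nat -> Prop) (s0 : cantor) (M : structure) : Prop :=
  exists pi : nat -> cantor,
    (forall x, B x -> generated s0 (pi x)) /\
    (forall x y, B x -> B y -> pi x =1 pi y -> x = y) /\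
    (forall t, generated s0 t -> exists x, B x /\ pi x =1 t) /\
    (forall nu x, B x -> (M (sR nu) [:: x] <-> prefix nu (pi x))) /\
    (forall nu x y, B x -> B y -> (M (sGF nu) [:: x; y] <-> pi y =1 F nu (pi x))).

Definition is_f (A : nat -> nat -> Prop) (a : nat -> nat) (p : nat -> nat -> nat)
    (E : nat -> nat -> Prop) (M : structure) : Prop :=
  (forall l, M sW l <-> exists x, l = [:: x] /\ A 0 x) /\
  (forall l, M sN l <-> exists i j y, l = [:: a i; y] /\ A (p i j).+1 y) /\
  (forall l, M sO l <-> exists m n z, l = [:: a m; a n; z] /\ A (p m n).+1 z) /\
  (forall m n, E m n -> is_copy (A (p m n).+1) zero_seq M) /\
  (forall m n, ~ E m n -> is_copy (A (p m n).+1) one_seq M) /\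
  (forall nu l, M (sR nu) l -> exists x k, l = [:: x] /\ A k.+1 x) /\
  (forall nu l, M (sGF nu) l -> exists x y k, l = [:: x; y] /\ A k.+1 x /\ A k.+1 y).

(* Main.v *)
Require Import Defs.
From mathcomp Require Import all_boot.
From Stdlib Require Import ClassicalEpsilon FunctionalExtensionality.
Set Implicit Arguments. Unset Strict Implicit. Unset Printing Implicit Defensive.

Lemma gen_ev s0 t : generated s0 t -> exists N, forall k, N <= k -> t k = s0 k.
Proof.
elim=> [t1 H|nu t1 t2 _ [N HN] H].
  by exists 0 => k _; rewrite H.
exists (maxn N (size nu)) => k; rewrite geq_max => /andP[h1 h2].
by rewrite H /F HN // nth_default // addbF.
Qed.

Lemma ev_gen s0 t N : (forall k, N <= k -> t k = s0 k) -> generated s0 t.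
Proof.
move=> H; apply: (@gen_step s0 (mkseq (fun k => t k (+) s0 k) N) s0).
  exact: gen_base.
move=> k; rewrite /F; case: (ltnP k N) => hk.
  by rewrite nth_mkseq // addbA addbC addbA addbb.
by rewrite nth_default ?size_mkseq // addbF H.
Qed.

Lemma gen_one_zero : ~ generated one_seq zero_seq.
Proof. by move=> /gen_ev [N HN]; have := HN N (leqnn N). Qed.
Lemma gen_zero_one : ~ generated zero_seq one_seq.
Proof. by move=> /gen_ev [N HN]; have := HN N (leqnn N). Qed.

Inductive Elt := V of nat | B of nat & nat & cantor.

Definition Rel (s : sym) (l : seq Elt) : Prop :=
  match s with
  | sW => exists i, l = [:: V i]
  | sN => exists i j sg, l = [:: V i; B i j sg]
  | sO => exists m n sg, l = [:: V m; V n; B m n sg]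
  | sR nu => exists m n sg, l = [:: B m n sg] /\ Defs.prefix nu sg
  | sGF nu => exists m n sg tg, l = [:: B m n sg; B m n tg] /\ tg = F nu sg
  end.

Definition updE (e : nat -> Elt) i x := fun j => if j == i then x else e j.

Fixpoint satE (valid : Elt -> Prop) (e : nat -> Elt) (phi : formula) : Prop :=
  match phi with
  | fRel s vs => Rel s (map e vs)
  | fEq i j => e i = e j
  | fNeg phi => ~ satE valid e phi
  | fAnd phi psi => satE valid e phi /\ satE valid e psi
  | fEx i phi => exists x, valid x /\ satE valid (updE e i x) phi
  end.

Fixpoint vars (phi : formula) : seq nat :=
  match phi with
  | fRel _ vs => vs
  | fEq i j => [:: i; j]
  | fNeg phi => vars phi
  | fAnd phi psi => vars phi ++ vars psi
  | fEx i phi => i :: vars phi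
  end.

Fixpoint maxR (phi : formula) : nat :=
  match phi with
  | fRel (sR nu) _ => size nu
  | fNeg phi => maxR phi
  | fAnd phi psi => maxn (maxR phi) (maxR psi)
  | fEx _ phi => maxR phi
  | _ => 0
  end.

Lemma satE_ext valid phi e1 e2 : (forall v, v \in vars phi -> e1 v = e2 v) ->
  (satE valid e1 phi <-> satE valid e2 phi).
Proof.
elim: phi e1 e2 => [s vs|i j|phi IH|phi IH psi IH'|i phi IH] e1 e2 /= H.
- by rewrite (_ : map e1 vs = map e2 vs) //; apply/eq_in_map.
- by rewrite !H ?inE ?eqxx ?orbT.
- by rewrite (IH e1 e2 H).
- rewrite (IH e1 e2) ?(IH' e1 e2) // => v hv; apply: H; rewrite mem_cat hv ?orbT //.
- have E x : satE valid (updE e1 i x) phi <-> satE valid (updE e2 i x) phi.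
    apply: IH => v hv; rewrite /updE; case: eqP => // _; rewrite H // inE hv orbT //.
  by split=> [][x [vx hx]]; exists x; split=> //; apply/E.
Qed.

Lemma satE_auto valid (Phi : Elt -> Elt) phi :
  (forall x, Phi (Phi x) = x) ->
  (forall x, valid x -> valid (Phi x)) ->
  (forall s l, (forall nu, s = sR nu -> size nu <= maxR phi) -> Rel s l -> Rel s (map Phi l)) ->
  forall e, satE valid e phi <-> satE valid (Phi \o e) phi.
Proof.
move=> inv hv; elim: phi => [s vs|i j|phi IH|phi IH psi IH'|i phi IH] /= hR e.
- have K : forall nu, s = sR nu -> size nu <= maxR (fRel s vs) by move=> nu ->.
  rewrite map_comp; split; first by move=> H; apply: (hR s _ K).
  move=> /(hR s _ K); rewrite -map_comp.
  rewrite -map_comp. by rewrite (@eq_map _ _ _ e) // => x /=; rewrite inv.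
  
- by split=> [->|/(f_equal Phi)]; rewrite ?inv.
- by have := IH hR e; tauto.
- have h1 : forall s l, (forall nu, s = sR nu -> size nu <= maxR phi) -> Rel s l -> Rel s (map Phi l).
    by move=> s l hs; apply: hR => nu /hs; rewrite leq_max => ->.
  have h2 : forall s l, (forall nu, s = sR nu -> size nu <= maxR psi) -> Rel s l -> Rel s (map Phi l).
    by move=> s l hs; apply: hR => nu /hs; rewrite leq_max => ->; rewrite orbT.
  by have := IH h1 e; have := IH' h2 e; tauto.
- have E x : Phi \o updE e i x = updE (Phi \o e) i (Phi x).
    by apply: functional_extensionality => j; rewrite /updE /=; case: eqP.
  split=> [][x [vx hx]].
    by exists (Phi x); split; [exact: hv|rewrite -E; apply/(IH hR (updE e i x))].
  exists (Phi x); split; first exact: hv.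
  by apply/(IH hR (updE e i (Phi x))); rewrite E inv.
Qed.
Definition swap (u w x : nat) := if x == u then w else if x == w then u else x.

Lemma swapK u w x : swap u w (swap u w x) = x.
Proof.
rewrite /swap; case: (eqVneq x u) => [->|hu].
  by rewrite eqxx; case: eqVneq => // ->.
case: (eqVneq x w) => [->|hw]; first by rewrite eqxx.
by rewrite (negbTE hu) (negbTE hw).
Qed.

Definition PhiT (b : nat -> nat -> bool) (t : nat -> nat) (n : nat) (e : Elt) :=
  match e with
  | V i => V (t i)
  | B m m' sg => B (t m) (t m') (fun k => sg k (+) ((b m m' != b (t m) (t m')) && (n <= k)))
  end.

Definition validb (b : nat -> nat -> bool) (e : Elt) :=
  match e with
  | V _ => True
  | B m n sg => generated (if b m n then zero_seq else one_seq) sg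
  end.

Lemma PhiT_inv b t n e : (forall x, t (t x) = x) -> PhiT b t n (PhiT b t n e) = e.
Proof.
move=> tK; case: e => [i|m m' sg] /=; rewrite ?tK //; congr B.
apply: functional_extensionality => k; rewrite -addbA.
by rewrite [b (t m) (t m') == _]eq_sym addbb addbF.
Qed.

Lemma PhiT_valid b t n e : validb b e -> validb b (PhiT b t n e).
Proof.
case: e => [i|m m' sg] //= /gen_ev [N HN].
apply: (@ev_gen _ _ (maxn N n)) => k; rewrite geq_max => /andP[h1 h2].
rewrite HN // h2 andbT.
by case: (b m m'); case: (b (t m) (t m')).
Qed.

Lemma PhiT_Rel b t n s l : (forall nu, s = sR nu -> size nu <= n) ->
  Rel s l -> Rel s (map (PhiT b t n) l).
Proof.
case: s => [|nu|nu||] /= hs.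
- by case=> i ->; exists (t i).
- case=> m [m' [sg [-> hp]]]; do 3 eexists; split; first reflexivity.
  move=> i hi; rewrite hp // (_ : n <= i = false) ?andbF ?addbF //.
  by apply/negbTE; rewrite -ltnNge; apply: leq_trans hi (hs _ erefl).
- case=> m [m' [sg [tg [-> ->]]]]; do 4 eexists; split; first reflexivity.
  by apply: functional_extensionality => k; rewrite /F addbAC.
- by case=> i [j [sg ->]]; do 3 eexists; reflexivity.
- by case=> i [j [sg ->]]; do 3 eexists; reflexivity.
Qed.

Lemma PhiT_fix b t n e : (forall i, i \in (match e with V i => [:: i] | B m m' _ => [:: m; m'] end) -> t i = i) ->
  PhiT b t n e = e.
Proof.
case: e => [i|m m' sg] /= H; first by rewrite H ?inE.
rewrite !H ?inE ?eqxx ?orbT //; congr B.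
by apply: functional_extensionality => k; rewrite addbF.
Qed.
Definition bE (E : nat -> nat -> Prop) m n : bool :=
  if excluded_middle_informative (E m n) then true else false.

Lemma bE_true E m n : bE E m n <-> E m n.
Proof. by rewrite /bE; case: excluded_middle_informative. Qed.

Lemma map_eq1 (T U : Type) (d : T -> U) l e1 : map d l = [:: e1] -> exists x, l = [:: x] /\ d x = e1.
Proof. by case: l => [|x [|y l]] //= [<-]; exists x. Qed.
Lemma map_eq2 (T U : Type) (d : T -> U) l e1 e2 : map d l = [:: e1; e2] ->
  exists x y, l = [:: x; y] /\ d x = e1 /\ d y = e2.
Proof. by case: l => [|x [|y [|z l]]] //= [<- <-]; exists x, y. Qed.
Lemma map_eq3 (T U : Type) (d : T -> U) l e1 e2 e3 : map d l = [:: e1; e2; e3] ->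
  exists x y z, l = [:: x; y; z] /\ d x = e1 /\ d y = e2 /\ d z = e3.
Proof. by case: l => [|x [|y [|z [|w l]]]] //= [<- <- <-]; exists x, y, z. Qed.

Lemma decode A a p E M (hA : is_partition A) (ha : enumerates a (A 0)) (hp : pairing p)
  (hM : is_f A a p E M) :
  exists d : nat -> Elt, (forall x, validb (bE E) (d x)) /\ (forall x y, d x = d y -> x = y) /\
    (forall e, validb (bE E) e -> exists x, d x = e) /\ (forall s l, M s l <-> Rel s (map d l)).
Proof.
case: hA => [hA1 [hA2 [_ _]]]; case: ha => [ha1 [ha2 ha3]]; case: hp => [hp1 hp2].
case: hM => [hW [hN [hO [hE0 [hE1 [hR hGF]]]]]].
pose cc m n := if bE E m n then zero_seq else one_seq.
have hc : forall mn : nat * nat, is_copy (A (p mn.1 mn.2).+1) (cc mn.1 mn.2) M.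
  case=> m n /=; rewrite /cc; have := bE_true E m n.
  case: (bE E m n) => hb; first by apply: hE0; apply/hb.
  by apply: hE1 => /hb.
have [PI hPI] := @choice _ _ (fun mn pi =>
   (forall x, A (p mn.1 mn.2).+1 x -> generated (cc mn.1 mn.2) (pi x)) /\
    (forall x y, A (p mn.1 mn.2).+1 x -> A (p mn.1 mn.2).+1 y -> pi x =1 pi y -> x = y) /\
    (forall t, generated (cc mn.1 mn.2) t -> exists x, A (p mn.1 mn.2).+1 x /\ pi x =1 t) /\
    (forall nu x, A (p mn.1 mn.2).+1 x -> (M (sR nu) [:: x] <-> Defs.prefix nu (pi x))) /\
    (forall nu x y, A (p mn.1 mn.2).+1 x -> A (p mn.1 mn.2).+1 y ->
       (M (sGF nu) [:: x; y] <-> pi y =1 F nu (pi x)))) hc.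
have hex : forall x, exists e, (exists j, x = a j /\ e = V j) \/
   (exists m n, A (p m n).+1 x /\ e = B m n (PI (m, n) x)).
  move=> x; have [i hi] := hA1 x; case: i hi => [|k] hk.
  - by have [j hj] := ha3 _ hk; exists (V j); left; exists j.
  - have [m [n hmn]] := hp2 k; exists (B m n (PI (m, n) x)); right; exists m, n.
    by rewrite hmn.
have [d hd] := @choice _ _ _ hex.
have d_a j : d (a j) = V j.
  case: (hd (a j)) => [[j' [/ha2 -> ->]]|[m [n [hb _]]]] //.
  by have := hA2 _ _ _ (ha1 j) hb.
have d_blk x m n : A (p m n).+1 x -> d x = B m n (PI (m, n) x).
  move=> hx; case: (hd x) => [[j [hj _]]|[m' [n' [hb ->]]]].
    by rewrite hj in hx; have := hA2 _ _ _ hx (ha1 j).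
  by have [<- <-] := hp1 _ _ _ _ (succn_inj (hA2 _ _ _ hx hb)).
have dV x j : d x = V j -> x = a j.
  by case: (hd x) => [[j' [-> ->]] [->]|[m [n [_ ->]]]].
have dB x m n sg : d x = B m n sg -> A (p m n).+1 x /\ PI (m, n) x = sg.
  by case: (hd x) => [[j' [-> ->]]|[m' [n' [hx ->]]] [<- <- <-]].
exists d; split; [|split; [|split]].
- move=> x; case: (hd x) => [[j [_ ->]]|[m [n [hx ->]]]] //=.
  exact: (hPI (m, n)).1 _ hx.
- move=> x y; case: (hd x) => [[j [-> ->]] /esym /dV -> //|[m [n [hx ->]]] /esym /dB [hy Ey]].
  apply: ((hPI (m, n)).2.1 _ _ hx hy) => k; by rewrite Ey.
- case=> [j|m n sg] /= hv; first by exists (a j).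
  have [x [hx Ex]] := (hPI (m, n)).2.2.1 _ hv.
  exists x; rewrite (d_blk _ _ _ hx); congr B.
  exact: functional_extensionality Ex.
- case=> [|nu|nu||] l /=; split.
  + move/hW => [x [-> hx]]; have [j <-] := ha3 _ hx; exists j; by rewrite /= d_a.
  + by case=> i /(@map_eq1 _ _ d) [x [-> /dV ->]]; apply/hW; exists (a i); split => //.
  + move=> H; have [x [k [El hx]]] := hR _ _ H; subst l.
    have [m [n hmn]] := hp2 k; rewrite -hmn in hx.
    exists m, n, (PI (m, n) x); rewrite /= (d_blk _ _ _ hx); split => //.
    by apply/((hPI (m, n)).2.2.2.1 nu x hx).
  + case=> m [n [sg [/(@map_eq1 _ _ d) [x [-> /dB [hx <-]]] hpre]]].
    by apply/((hPI (m, n)).2.2.2.1 nu x hx).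
  + move=> H; have [x [y [k [El [hx hy]]]]] := hGF _ _ H; subst l.
    have [m [n hmn]] := hp2 k; rewrite -hmn in hx hy.
    exists m, n, (PI (m, n) x), (PI (m, n) y); rewrite /= (d_blk _ _ _ hx) (d_blk _ _ _ hy).
    split => //; apply: functional_extensionality.
    by apply/((hPI (m, n)).2.2.2.2 nu x y hx hy).
  + case=> m [n [sg [tg [/(@map_eq2 _ _ d) [x [y [-> [/dB [hx <-] /dB [hy <-]]]]] htg]]]].
    by apply/((hPI (m, n)).2.2.2.2 nu x y hx hy); rewrite htg.
  + move/hN => [i [j [y [-> hy]]]]; exists i, j, (PI (i, j) y).
    by rewrite /= d_a (d_blk _ _ _ hy).
  + case=> i [j [sg /(@map_eq2 _ _ d) [x [y [-> [/dV -> /dB [hy _]]]]]]].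
    by apply/hN; exists i, j, y.
  + move/hO => [m [n [z [-> hz]]]]; exists m, n, (PI (m, n) z).
    by rewrite /= !d_a (d_blk _ _ _ hz).
  + case=> m [n [sg /(@map_eq3 _ _ d) [x [y [z [-> [/dV -> [/dV -> /dB [hz _]]]]]]]]].
    by apply/hO; exists m, n, z.
Qed.
Definition idxs (e : Elt) := match e with V i => [:: i] | B m m' _ => [:: m; m'] end.
Definition idx1 (e : Elt) := match e with V i => i | B m _ _ => m end.
Definition idx2 (e : Elt) := match e with V i => i | B _ m' _ => m' end.

Definition hEmap (g : nat -> nat) (e : Elt) :=
  match e with V i => V (g i) | B m n sg => B (g m) (g n) sg end.

Lemma hE_inj g : injective g -> injective (hEmap g).
Proof.
by move=> gi [i|m n sg] [i'|m' n' sg'] //= [] => [/gi -> | /gi -> /gi -> ->].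
Qed.

Lemma hE_Rel g s l : injective g -> (Rel s (map (hEmap g) l) <-> Rel s l).
Proof.
move=> gi; case: s => [|nu|nu||] /=; split.
- by case=> i /(@map_eq1 _ _ (hEmap g)) [[j|? ? ?] [-> //= [_]]]; exists j.
- by case=> i ->; exists (g i).
- case=> m [n [sg [/(@map_eq1 _ _ (hEmap g)) [[j|m1 n1 sg1] [-> //= [_ _ E]]] hp]]].
  by exists m1, n1, sg1; subst.
- by case=> m [n [sg [-> hp]]]; exists (g m), (g n), sg.
- case=> m [n [sg [tg [/(@map_eq2 _ _ (hEmap g)) [[j|m1 n1 sg1] [[j'|m2 n2 tg2] [-> [//= [E3 E4 E5] [E1 E2 E6]]]]] Etg]]]].
  subst; move/gi: E1 => E1; move/gi: E2 => E2; subst.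
  by do 4 eexists; split; [reflexivity|].
- by case=> m [n [sg [tg [-> ->]]]]; exists (g m), (g n), sg, (F nu sg).
- case=> i [j [sg /(@map_eq2 _ _ (hEmap g)) [[i1|? ? ?] [[?|m2 n2 sg2] [-> [//= [E3] [E1 E2 E4]]]]]]].
  subst; move/gi: E1 => E1; subst.
  by do 3 eexists.
- by case=> i [j [sg ->]]; exists (g i), (g j), sg.
- case=> m [n [sg /(@map_eq3 _ _ (hEmap g)) [[i1|? ? ?] [[i2|? ? ?] [[?|m3 n3 sg3] [-> [//= [E7] [//= [E8] [E1 E2 E4]]]]]]]]].
  subst; move/gi: E1 => E1; move/gi: E2 => E2; subst.
  by do 3 eexists.
- by case=> m [n [sg ->]]; exists (g m), (g n), sg.
Qed.
Lemma fresh_range (g : nat -> nat) (I : seq nat) : injective g -> exists k, g k \notin I.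
Proof.
move=> gi; case: (boolP (has (fun k => g k \notin I) (iota 0 (size I).+1))).
  by case/hasP => k _ hk; exists k.
move/hasPn => H; exfalso.
have : size (map g (iota 0 (size I).+1)) <= size I.
  apply: uniq_leq_size; first by rewrite map_inj_uniq ?iota_uniq.
  by move=> x /mapP [k hk ->]; have := H k hk; rewrite negbK.
by rewrite size_map size_iota ltnn.
Qed.

Lemma step (g : nat -> nat) (I : seq nat) (j : nat) : injective g ->
  (forall x, x \in I -> exists k, g k = x) ->
  exists u w, (forall x, x \in I -> swap u w x = x) /\ exists k, g k = swap u w j.
Proof.
move=> gi hI; case: (excluded_middle_informative (exists k, g k = j)) => hj.
  exists j, j; split.
    by move=> x _; rewrite /swap; case: eqP.
  by rewrite /swap eqxx.
have [k hk] := fresh_range I gi.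
exists j, (g k); split; last by exists k; rewrite /swap eqxx.
move=> x hx; rewrite /swap; case: eqP => [E|_].
  by exfalso; apply: hj; subst; apply: hI.
by case: eqP => // E; subst; rewrite hx in hk.
Qed.

Lemma hE_elem (g : nat -> nat) (bG bH : nat -> nat -> bool) :
  injective g -> (forall m n, bG m n = bH (g m) (g n)) ->
  forall phi e, (forall v, validb bG (e v)) ->
  (satE (validb bG) e phi <-> satE (validb bH) (hEmap g \o e) phi).
Proof.
move=> gi hb; elim=> [s vs|i j|phi IH|phi IH psi IH'|i phi IH] e ev /=.
- by rewrite map_comp hE_Rel.
- by split=> [->//|/(hE_inj gi)].
- by have := IH e ev; tauto.
- by have := IH e ev; have := IH' e ev; tauto.
- have vh x : validb bG x -> validb bH (hEmap g x).
    by case: x => [?|m n sg] //=; rewrite hb.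
  have E x : hEmap g \o updE e i x = updE (hEmap g \o e) i (hEmap g x).
    by apply: functional_extensionality => v; rewrite /updE /=; case: eqP.
  have ev' x : validb bG x -> forall v, validb bG (updE e i x v).
    by move=> vx v; rewrite /updE; case: eqP.
  split=> [][x [vx hx]].
    exists (hEmap g x); split; first exact: vh.
    by rewrite -E -IH //; apply: ev'.
  (* backward: move witness into the image *)
  pose I := flatten (map (fun v => idxs (hEmap g (e v))) (vars phi)).
  have hI : forall x, x \in I -> exists k, g k = x.
    move=> z /flattenP [s /mapP [v _ ->]]; case: (e v) => [k|m n sg] /=.
      by rewrite inE => /eqP ->; exists k.
    by rewrite !inE => /orP [] /eqP ->; [exists m|exists n].
  have [u1 [w1 [f1 [k1 hk1]]]] := step (idx1 x) gi hI.
  pose Phi1 := PhiT bH (swap u1 w1) (maxR phi).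
  have hI' : forall z, z \in idx1 (Phi1 x) :: I -> exists k, g k = z.
    move=> z; rewrite inE => /orP [/eqP ->|/hI //].
    by exists k1; rewrite hk1; case: (x).
  have [u2 [w2 [f2 [k2 hk2]]]] := step (idx2 (Phi1 x)) gi hI'.
  pose Phi2 := PhiT bH (swap u2 w2) (maxR phi).
  have auto t : (forall z, t (t z) = z) -> forall e',
     satE (validb bH) e' phi <-> satE (validb bH) (PhiT bH t (maxR phi) \o e') phi.
    move=> tK e'; apply: satE_auto.
    - by move=> z; apply: PhiT_inv.
    - by move=> z; apply: PhiT_valid.
    - by move=> s l hs; apply: PhiT_Rel.
  have vy : validb bH (Phi2 (Phi1 x)) by apply: PhiT_valid; apply: PhiT_valid.
  have fixI z : (forall q, q \in idxs z -> q \in I) -> Phi2 (Phi1 z) = z.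
    move=> hz; rewrite /Phi1 /Phi2.
    rewrite (@PhiT_fix bH (swap u1 w1) (maxR phi) z); last by move=> q /hz /f1.
    rewrite (@PhiT_fix bH (swap u2 w2) (maxR phi) z) // => q /hz hq.
    by apply: f2; rewrite inE hq orbT.
  have [y' [vy' hy']] : exists y', validb bG y' /\ hEmap g y' = Phi2 (Phi1 x).
    have h1 : idx1 (Phi2 (Phi1 x)) = idx1 (Phi1 x).
      by rewrite /Phi2; case: (Phi1 x) f2 => [q|q q' sg] /= -> //; rewrite inE eqxx.
    have h2 : idx2 (Phi2 (Phi1 x)) = swap u2 w2 (idx2 (Phi1 x)) by case: (Phi1 x).
    have h3 : idx1 (Phi1 x) = swap u1 w1 (idx1 x) by case: (x).
    move: vy h1 h2; case: (Phi2 (Phi1 x)) => [q|q q' sg] /= vy h1 h2.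
      by exists (V k2); rewrite /= hk2 -h2.
    exists (B k1 k2 sg); split; last by rewrite /= hk2 hk1 -h3 -h1 -h2.
    by rewrite /= hb hk2 hk1 -h3 -h1 -h2.
  exists y'; split=> //; rewrite IH; last exact: ev'.
  rewrite E; apply/(satE_ext _ (e2 := PhiT bH (swap u2 w2) (maxR phi) \o
      (PhiT bH (swap u1 w1) (maxR phi) \o updE (hEmap g \o e) i x))).
    move=> v hv; rewrite /updE /=; case: eqP => [_|_]; first exact: hy'.
    symmetry; apply: fixI => q hq; apply/flattenP; exists (idxs (hEmap g (e v))) => //.
    by apply: map_f.
  apply: (proj1 (auto _ (swapK u2 w2) _)); apply: (proj1 (auto _ (swapK u1 w1) _)).
  exact: hx.
Qed.

Lemma transfer (M : structure) (d : nat -> Elt) (b : nat -> nat -> bool) :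
  (forall x, validb b (d x)) -> (forall x y, d x = d y -> x = y) ->
  (forall e, validb b e -> exists x, d x = e) -> (forall s l, M s l <-> Rel s (map d l)) ->
  forall phi a, sat M a phi <-> satE (validb b) (d \o a) phi.
Proof.
move=> dv di ds dR; elim=> [s vs|i j|phi IH|phi IH psi IH'|i phi IH] a /=.
- by rewrite dR map_comp.
- by split=> [->//|/di].
- by have := IH a; tauto.
- by have := IH a; have := IH' a; tauto.
- have E x : d \o update a i x = updE (d \o a) i (d x).
    by apply: functional_extensionality => v; rewrite /update /updE /=; case: eqP.
  split=> [][x hx].
    by exists (d x); split; [apply: dv|rewrite -E -IH].
  case: hx => vx; have [z <-] := ds _ vx; rewrite -E -IH => hz; by exists z.
Qed.
Lemma elem_atomic (M N : structure) h : elementary_embedding M N h ->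
  (forall s xs, M s xs -> N s (map h xs)) /\ (forall x y, h x = h y -> x = y).
Proof.
move=> H; split.
  move=> s xs hs; have := (H (fRel s (iota 0 (size xs))) (fun v => nth 0 xs v)).1.
  rewrite /= map_comp -/(mkseq _ _) mkseq_nth; exact.
move=> x y hxy; have := (H (fEq 0 1) (fun v => nth 0 [:: x; y] v)).2.
by apply.
Qed.

Lemma copy_transfer A a p MG MH h (g : nat -> nat) m n s0 s1
  (ha : enumerates a (A 0)) (hp : pairing p)
  (hOG : forall l, MG sO l <-> exists m n z, l = [:: a m; a n; z] /\ A (p m n).+1 z)
  (hOH : forall l, MH sO l <-> exists m n z, l = [:: a m; a n; z] /\ A (p m n).+1 z)
  (hat : forall s xs, MG s xs -> MH s (map h xs))
  (hg : forall i, h (a i) = a (g i)) :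
  is_copy (A (p m n).+1) s0 MG -> is_copy (A (p (g m) (g n)).+1) s1 MH -> generated s1 s0.
Proof.
case: ha => [ha1 [ha2 ha3]]; case: hp => [hp1 hp2].
case=> [pG [_ [_ [sG [rG _]]]]] [pH [gH [_ [_ [rH _]]]]].
have [x [hx ex]] := sG s0 (gen_base (frefl _)).
have : MH sO (map h [:: a m; a n; x]) by apply: hat; apply/hOG; exists m, n, x.
rewrite /= !hg => /hOH [m' [n' [z [[/ha2 E1 /ha2 E2 E3] hz]]]]; subst.
have -> : s0 = pH (h x).
  apply: functional_extensionality => k.
  have hpre : Defs.prefix (mkseq s0 k.+1) (pG x).
    by move=> i; rewrite size_mkseq => hi; rewrite nth_mkseq // ex.
  have := hat _ _ ((rG _ _ hx).2 hpre) => /= /(rH _ _ hz) /(_ k).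
  by rewrite size_mkseq nth_mkseq // => ->.
exact: gH.
Qed.

Theorem lemma3p2 (A : nat -> nat -> Prop) (a : nat -> nat) (p : nat -> nat -> nat)
    (hA : is_partition A) (ha : enumerates a (A 0)) (hp : pairing p)
    (EG EH : nat -> nat -> Prop) (hG : is_graph EG) (hH : is_graph EH)
    (MG MH : structure) (hMG : is_f A a p EG MG) (hMH : is_f A a p EH MH) :
  graph_embeds EG EH <-> elem_embeddable MG MH.
Proof.
split.
- case=> g [gi hgE].
  have hb m n : bE EG m n = bE EH (g m) (g n).
    by apply/idP/idP => /bE_true h; apply/bE_true; apply/hgE.
  have [dG [dGv [dGi [dGs dGR]]]] := decode hA ha hp hMG.
  have [dH [dHv [dHi [dHs dHR]]]] := decode hA ha hp hMH.
  have [enc henc] : exists enc : Elt -> nat, forall y, validb (bE EH) y -> dH (enc y) = y.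
    apply: (@choice _ _ (fun y x => validb (bE EH) y -> dH x = y)) => y.
    case: (excluded_middle_informative (validb (bE EH) y)) => hy.
      by have [x hx] := dHs _ hy; exists x.
    by exists 0.
  exists (fun x => enc (hEmap g (dG x))) => phi asg.
  rewrite (transfer dGv dGi dGs dGR) (transfer dHv dHi dHs dHR).
  rewrite (hE_elem gi hb); last by move=> v; apply: dGv.
  have -> : dH \o ((fun x => enc (hEmap g (dG x))) \o asg) = hEmap g \o (dG \o asg) => //.
  apply: functional_extensionality => v /=; apply: henc.
  by case: (dG (asg v)) (dGv (asg v)) => [?|m n sg] //=; rewrite hb.
- case=> h /elem_atomic [hat hinj].
  have hW := hMG.1; have hWH := hMH.1.
  have hOG := hMG.2.2.1; have hOH := hMH.2.2.1.
  have [ha1 [ha2 ha3]] := ha.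
  have [g hg] : exists g, forall i, h (a i) = a (g i).
    apply: (@choice _ _ (fun i j => h (a i) = a j)) => i.
    have : MH sW (map h [:: a i]) by apply: hat; apply/hW; exists (a i).
    by move/hWH => [x [[->] /ha3 [j <-]]]; exists j.
  exists g; split.
    by move=> i j E; apply: ha2; apply: hinj; rewrite !hg E.
  move=> m n.
  have ct := @copy_transfer A a p MG MH h g m n _ _ ha hp hOG hOH hat hg.
  case: (excluded_middle_informative (EG m n)) => hm;
  case: (excluded_middle_informative (EH (g m) (g n))) => hn; try tauto.
  + by exfalso; apply: gen_one_zero; apply: ct; [apply: hMG.2.2.2.1|apply: hMH.2.2.2.2.1].
  + by exfalso; apply: gen_zero_one; apply: ct; [apply: hMG.2.2.2.2.1|apply: hMH.2.2.2.1].
Qed.
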